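(* Let $C_1,C_2$ be $d$-copulas admitting tail dependence functions with $C_1<_{TD}C_2$. Let $S\subset(0,\infty)^d$ be a cone (i.e. $\boldsymbol w\in S$ implies $\lambda\boldsymbol w\in S$ for all $\lambda>0$) such that $S\cup\{\boldsymbol 0\}$ is closed in $[0,\infty)^d$. Then there exists $\varepsilon>0$ such that $C_1(\boldsymbol u)\le C_2(\boldsymbol u)$ for all $\boldsymbol u\in S\cap B_\varepsilon(\boldsymbol 0)\cap[0,1]^d$.
   Context: A $d$-copula is a grounded, $d$-increasing function $C:[0,1]^d\to[0,1]$ with uniform margins. Its tail dependence function is $\Lambda(\boldsymbol w;C)=\lim_{s\searrow0}C(s\boldsymbol w)/s$ for $\boldsymbol w\in[0,\infty)^d$, assumed to exist for all $\boldsymbol w$. $C_1<_{TD}C_2$ means $\Lambda(\boldsymbol w;C_1)<\Lambda(\boldsymbol w;C_2)$ for all $\boldsymbol w\in(0,\infty)^d$. $B_\varepsilon(\boldsymbol 0)$ is the open Euclidean ball of radius $\varepsilon$ centred at $\boldsymbol 0$. *)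

(* Defs.v *)
From HB Require Import structures.
From mathcomp Require Import all_boot all_order all_algebra.
From mathcomp Require Import all_classical all_reals all_analysis.
Set Implicit Arguments. Unset Strict Implicit. Unset Printing Implicit Defensive.
Import Order.TTheory GRing.Theory Num.Theory.
Import numFieldNormedType.Exports.
Local Open Scope classical_set_scope.
Local Open Scope ring_scope.

Section Copulas.
Variables (R : realType) (d : nat).
Local Notation pt := ('I_d -> R).

Definition unit_cube (u : pt) : Prop := forall i, 0 <= u i <= 1.
Definition nonneg_orthant (w : pt) : Prop := forall i, 0 <= w i.
Definition pos_orthant (w : pt) : Prop := forall i, 0 < w i.

Definition zero_pt : pt := fun _ => 0.
Definition scale_pt (s : R) (w : pt) : pt := fun i => s * w i.

Definition enorm (u : pt) : R := Num.sqrt (\sum_(i < d) u i ^+ 2).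
Definition edist (u v : pt) : R := enorm (fun i => u i - v i).
Definition eball0 (eps : R) (u : pt) : Prop := enorm u < eps.

Definition vertex (a b : pt) (e : {ffun 'I_d -> bool}) : pt :=
  fun i => if e i then b i else a i.

Definition cvolume (C : pt -> R) (a b : pt) : R :=
  \sum_(e : {ffun 'I_d -> bool})
     (-1) ^+ #|[set i | ~~ e i]| * C (vertex a b e).

(* A d-copula: a function C : [0,1]^d -> [0,1] (values outside the cube are
   irrelevant) which is grounded, d-increasing and has uniform margins. *)
Definition is_copula (C : pt -> R) : Prop :=
  [/\ (forall u, unit_cube u -> 0 <= C u <= 1),
      (forall u, unit_cube u -> (exists i, u i = 0) -> C u = 0),
      (forall a b, unit_cube a -> unit_cube b -> (forall i, a i <= b i) ->
         0 <= cvolume C a b) &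
      (forall u i, unit_cube u -> (forall j, j != i -> u j = 1) -> C u = u i)].

Definition is_tdf (C : pt -> R) (Lam : pt -> R) : Prop :=
  forall w, nonneg_orthant w ->
    (fun s : R => C (scale_pt s w) / s) @ (0 : R)^'+ --> Lam w.

Definition td_lt (Lam1 Lam2 : pt -> R) : Prop :=
  forall w, pos_orthant w -> Lam1 w < Lam2 w.

Definition is_cone (S : set pt) : Prop :=
  forall w lam, S w -> 0 < lam -> S (scale_pt lam w).

Definition closed_in_orthant (A : set pt) : Prop :=
  forall w, nonneg_orthant w -> ~ A w ->
    exists2 del : R, 0 < del &
      forall v, nonneg_orthant v -> edist v w < del -> ~ A v.

End Copulas.

(* Main.v *)
Require Import Defs.
From HB Require Import structures.
From mathcomp Require Import all_boot all_order all_algebra.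
From mathcomp Require Import all_classical all_reals all_analysis.
From mathcomp Require Import lra.
Import Order.TTheory GRing.Theory Num.Theory.
Local Open Scope classical_set_scope.
Local Open Scope ring_scope.

Section Helpers.
Import numFieldNormedType.Exports.
Import ArrowAsProduct.

Lemma box_nbhs (R : realType) (d : nat) (w : 'I_d -> R) (del : 'I_d -> R) :
  (forall i, 0 < del i) -> nbhs w [set v : 'I_d -> R | forall i, `|v i - w i| < del i].
Proof.
move=> hdel.
have FF := @filter_forall _ _ (fun i (v : 'I_d -> R) => `|v i - w i| < del i) (nbhs w) _.
apply: FF.
move=> i.
have H := @proj_continuous _ (fun _ : 'I_d => R) i w.
have N : nbhs (w i) [set x : R | `|x - w i| < del i].
  apply/nbhs_normP; exists (del i) => //= x.
  by rewrite /ball_ /= distrC.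
exact: (H _ N).
Qed.

Lemma copula_step (R : realType) (d : nat) (C : ('I_d -> R) -> R) (u v : 'I_d -> R) (i : 'I_d) :
  is_copula C -> unit_cube u -> unit_cube v -> (forall j, j != i -> u j = v j) ->
  u i <= v i -> C u <= C v.
Proof.
case=> _ hg hinc _ hu hv huv hi.
pose lo : 'I_d -> R := fun j => if j == i then u i else 0.
have hlo : unit_cube lo.
  by move=> j; rewrite /lo; case: ifP => _ //; rewrite lexx ler01.
have hlov : forall j, lo j <= v j.
  move=> j; rewrite /lo; case: eqP => [->|_] //; by case/andP: (hv j).
have := hinc lo v hlo hv hlov.
pose eT : {ffun 'I_d -> bool} := [ffun _ => true].
pose eF : {ffun 'I_d -> bool} := [ffun j => j != i].
have neTF : eF != eT.
  by apply/eqP => /(congr1 (fun e : {ffun 'I_d -> bool} => e i)); rewrite !ffunE eqxx.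
rewrite /cvolume (bigD1 eT) //= (bigD1 eF) //= big1; last first.
  move=> e /andP [neT neF].
  have [j [hj hej]] : exists j, j != i /\ e j = false.
    case: (pselect (exists j, j != i /\ e j = false)) => // H; exfalso.
    have H' j : j != i -> e j.
      by move=> hj; apply: contra_notT H => /negbTE ej; exists j.
    case: (boolP (e i)) => ei.
      case/negP: neT; apply/eqP/ffunP => j; rewrite ffunE.
      by case: (eqVneq j i) => [->//|hji]; apply: H'.
    case/negP: neF; apply/eqP/ffunP => j; rewrite ffunE.
    case: (eqVneq j i) => [->|hji]; first by apply/negbTE.
    by apply: H'.
  rewrite hg ?mulr0 //.
    move=> k; rewrite /vertex; case: (e k); [exact: hv | exact: hlo].
  by exists j; rewrite /vertex hej /lo (negbTE hj).
have -> : #|[set j | ~~ eT j]| = 0%N.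
  by apply: eq_card0 => j; apply/negbTE/negP; rewrite in_setE /= ffunE.
have -> : #|[set j | ~~ eF j]| = 1%N.
  rewrite -(card1 i); apply: eq_card => j; rewrite inE; apply/idP/idP; rewrite in_setE /= ffunE negbK //.
have -> : vertex lo v eT = v by apply: funext => j; rewrite /vertex ffunE.
have -> : vertex lo v eF = u.
  apply: funext => j; rewrite /vertex ffunE /lo.
  case: (eqVneq j i) => [->|hji] //=; by rewrite huv.
rewrite expr0 expr1 mul1r addr0 mulN1r subr_ge0 //.
Qed.

Lemma copula_mono (R : realType) (d : nat) (C : ('I_d -> R) -> R) (x y : 'I_d -> R) :
  is_copula C -> unit_cube x -> unit_cube y -> (forall i, x i <= y i) -> C x <= C y.
Proof.
move=> hC hx hy hxy.
pose p (k : nat) : 'I_d -> R := fun j => if (j < k)%N then y j else x j.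
have hp k : unit_cube (p k) by move=> j; rewrite /p; case: ifP.
have hpk k : C x <= C (p k).
  elim: k => [|k IH].
    by have -> : p 0%N = x by apply: funext => j; rewrite /p ltn0.
  apply: (le_trans IH).
  case: (ltnP k d) => hk; last first.
    have -> : p k.+1 = p k; last by [].
    apply: funext => j; rewrite /p.
    by rewrite (leq_trans (ltn_ord j) hk) (leq_trans (ltn_ord j) (leqW hk)).
  apply: (@copula_step R d C (p k) (p k.+1) (Ordinal hk)) => //.
    move=> j hj; rewrite /p.
    have hjk : (nat_of_ord j != k) by apply: contra hj => /eqP hjk; apply/eqP/val_inj.
    by rewrite [(j < k.+1)%N]ltnS [(j <= k)%N]leq_eqVlt (negbTE hjk).
  by rewrite /p /= ltnn ltnSn.
have -> : y = p d by apply: funext => j; rewrite /p ltn_ord.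
exact: hpk.
Qed.

Lemma near0rP (R : realType) (P : R -> Prop) :
  (\forall t \near 0^'+, P t) -> exists2 del : R, 0 < del & forall t, 0 < t -> t < del -> P t.
Proof.
move=> /nbhs_normP [e /= e0 H]; exists e => // t t0 te; apply: H => //=.

by rewrite distrC subr0 gtr0_norm.
Qed.

Lemma near0r_small (R : realType) (s0 : R) :
  0 < s0 -> \forall t \near (0:R)^'+, 0 < t /\ t < s0.
Proof.
move=> s00; apply/nbhs_normP; exists s0 => //= t.
rewrite /ball_ /= distrC subr0 => ht t0; split => //.
by rewrite -(gtr0_norm t0).
Qed.

Lemma tdf_bound (R : realType) (d : nat) (C L : ('I_d -> R) -> R) (w : 'I_d -> R) (g : R) :
  is_tdf C L -> nonneg_orthant w -> 0 < g ->
  exists2 del : R, 0 < del & forall t, 0 < t -> t < del ->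
    t * (L w - g) < C (scale_pt t w) /\ C (scale_pt t w) < t * (L w + g).
Proof.
move=> hT hw g0.
have /cvgrPdist_lt /(_ g g0) := hT w hw.
move=> /near0rP [del del0 H]; exists del => // t t0 tdel.
have := H t t0 tdel; rewrite ltr_norml => /andP [h1 h2].
set q := C (scale_pt t w) / t in h1 h2.
have -> : C (scale_pt t w) = t * q by rewrite /q mulrC divfK // gt_eqF.
rewrite !ltr_pM2l //; split; lra.
Qed.

Lemma local_cmp (R : realType) (d : nat) (C1 C2 L1 L2 : ('I_d -> R) -> R) (w : 'I_d -> R) :
  is_tdf C1 L1 -> is_tdf C2 L2 -> nonneg_orthant w -> L1 w < L2 w ->
  exists eta : R, [/\ 0 < eta, eta < 1 & exists2 s0 : R, 0 < s0 & forall s, 0 < s -> s < s0 ->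
    C1 (scale_pt (s * (1 + eta)) w) < C2 (scale_pt (s * (1 - eta)) w)].
Proof.
move=> h1 h2 hw hL.
set a := L1 w; set b := L2 w.
set g := (b - a) / 4.
have g0 : 0 < g by rewrite /g divr_gt0 // subr_gt0.
have [del1 del10 H1] := @tdf_bound _ _ C1 L1 w g h1 hw g0.
have [del2 del20 H2] := @tdf_bound _ _ C2 L2 w g h2 hw g0.
set M := `|a| + `|b| + 1.
have M0 : 0 < M by rewrite /M ltr_wpDl // addr_ge0.
set eta := g / M.
have eta0 : 0 < eta by rewrite divr_gt0.
have etaM : eta * M = g by rewrite /eta divfK // gt_eqF.
have ha : - `|a| <= a by rewrite lerNnormlW.
have ha' : a <= `|a| by rewrite ler_norm.
have hb : - `|b| <= b by rewrite lerNnormlW.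
have hb' : b <= `|b| by rewrite ler_norm.
have eta1 : eta < 1.
  rewrite -(ltr_pM2r M0) etaM mul1r /g /M; lra.
exists eta; split => //.
exists (Num.min (del1 / 2) del2); first by rewrite lt_min divr_gt0 // del20.
move=> s s0; rewrite lt_min => /andP [sd1 sd2].
have t1pos : 0 < s * (1 + eta) by rewrite mulr_gt0 // ltr_wpDr // ltW.
have t2pos : 0 < s * (1 - eta) by rewrite mulr_gt0 // subr_gt0.
have t1d : s * (1 + eta) < del1.
  have : s * (1 + eta) < s * 2 by rewrite ltr_pM2l //; lra.
  move=> h; apply: (lt_le_trans h); move: sd1; rewrite ltr_pdivlMr //; lra.
have t2d : s * (1 - eta) < del2.
  apply: le_lt_trans sd2; rewrite ger_pMr //; lra.
have [_ c1] := H1 _ t1pos t1d.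
have [c2 _] := H2 _ t2pos t2d.
apply: (lt_trans c1); apply: le_lt_trans c2.
rewrite -!mulrA ler_pM2l //.
have hM : eta * (a + b) <= eta * M by rewrite ler_pM2l // /M; lra.
rewrite etaM in hM.
rewrite -/a -/b.
have hg : b - a = 4 * g by rewrite /g mulrC divfK // pnatr_eq0.
nra.
Qed.

Lemma coord_le_enorm (R : realType) (d : nat) (u : 'I_d -> R) i : `|u i| <= enorm u.
Proof.
rewrite /enorm -sqrtr_sqr ler_sqrt ?sumr_ge0 // => [|j _]; last exact: sqr_ge0.
by rewrite (bigD1 i) //= lerDl sumr_ge0 // => j _; exact: sqr_ge0.
Qed.

Lemma enorm_small (R : realType) (d : nat) (u : 'I_d -> R) (del : R) :
  0 < del -> (forall i, `|u i| < del / (d.+1)%:R) -> enorm u < del.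
Proof.
move=> del0 hu.
set c := del / (d.+1)%:R.
have c0 : 0 < c by rewrite divr_gt0.
have hdel : del = (d.+1)%:R * c by rewrite /c mulrC divfK // pnatr_eq0.
have hs : \sum_(i < d) u i ^+ 2 <= d%:R * c ^+ 2.
  have -> : d%:R * c ^+ 2 = \sum_(i < d) c ^+ 2 by rewrite sumr_const card_ord mulr_natl.
  apply: ler_sum => i _.
  have := hu i; rewrite -/c ltr_norml => /andP [h1 h2]; nra.
rewrite /enorm -(ger0_norm (ltW del0)) -sqrtr_sqr ltr_sqrt ?exprn_gt0 //.
apply: (le_lt_trans hs); rewrite hdel.
have hd : (0 : R) <= d%:R by rewrite ler0n.
have hd1 : (d.+1)%:R = d%:R + 1 :> R by rewrite -addn1 natrD.
rewrite hd1; nra.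
Qed.

Lemma main_aux (R : realType) (d : nat)
    (C1 C2 Lam1 Lam2 : ('I_d -> R) -> R) (S : set ('I_d -> R)) :
  is_copula C1 -> is_copula C2 ->
  is_tdf C1 Lam1 -> is_tdf C2 Lam2 ->
  td_lt Lam1 Lam2 ->
  S `<=` @pos_orthant R d ->
  is_cone S ->
  closed_in_orthant (S `|` [set @zero_pt R d]) ->
  exists2 eps : R, 0 < eps &
    forall u, S u -> eball0 eps u -> unit_cube u -> C1 u <= C2 u.
Proof.
move=> hC1 hC2 hT1 hT2 hlt hSpos hcone hclosed.
case: (posnP d) => [d0|dpos].
  exists 1 => // u Su _ _.
  have e c : scale_pt c u = u.
    by apply: funext => i; have := ltn_ord i; rewrite [X in (_ < X)%N]d0.
  have hw : nonneg_orthant u by move=> i; have := ltn_ord i; rewrite [X in (_ < X)%N]d0.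
  have hp : pos_orthant u by move=> i; have := ltn_ord i; rewrite [X in (_ < X)%N]d0.
  have [eta [eta0 eta1 [s0 s00 H]]] := @local_cmp _ _ C1 C2 Lam1 Lam2 u hT1 hT2 hw (hlt u hp).
  have h1 : 0 < s0 / 2 by rewrite divr_gt0.
  have h2 : s0 / 2 < s0 by rewrite ltr_pdivrMr //; lra.
  by have := H _ h1 h2; rewrite !e => /ltW.
set K := [set v : 'I_d -> R | S v /\ \sum_(i < d) v i = 1].
have coord_le_sum (v : 'I_d -> R) i : nonneg_orthant v -> v i <= \sum_(j < d) v j.
  by move=> hv; rewrite (bigD1 i) //= lerDl sumr_ge0.
have hd1 : (d.+1)%:R = d%:R + 1 :> R by rewrite -addn1 natrD.
have hd0 : (0 : R) < d%:R by rewrite ltr0n.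
have Ksub : K `<=` [set f : 'I_d -> R | forall i, (`[(0:R), 1]%classic : set R) (f i)].
  move=> v [Sv sv] i /=; rewrite in_itv /=.
  have := hSpos v Sv i => vi; rewrite ltW //=.
  by rewrite -sv coord_le_sum // => j; apply: ltW; apply: hSpos.
have hbox : compact [set f : 'I_d -> R | forall i, (`[(0:R), 1]%classic : set R) (f i)].
  have H := (@tychonoff _ (fun _ : 'I_d => R) (fun _ => (`[(0:R), 1]%classic : set R)) (fun i => @segment_compact R 0 1)).
  exact: H.
have Kcl : closed K.
  move=> w cw.
  have get (del : R) : 0 < del -> exists v, K v /\ forall i, `|v i - w i| < del.
    move=> del0.
    have [v [Kv Bv]] := cw _ (@box_nbhs R d w (fun _ => del) (fun _ => del0)).
    by exists v.
  have wnn : nonneg_orthant w.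
    move=> i; rewrite leNgt; apply/negP => wi0.
    have [v [[Sv _] Bv]] := get (- w i) ltac:(by rewrite oppr_gt0).
    have := hSpos v Sv i; have := Bv i; rewrite ltr_norml => /andP [_ h]; lra.
  have ws : \sum_(i < d) w i = 1.
    case: (pselect (\sum_(i < d) w i = 1)) => // hne; exfalso.
    have e0 : 0 < `|\sum_(i < d) w i - 1| by rewrite normr_gt0 subr_eq0; apply/eqP.
    set e := `|\sum_(i < d) w i - 1| in e0.
    have [v [[Sv sv] Bv]] := get (e / d.+1%:R) ltac:(by rewrite divr_gt0).
    have h1 : `|\sum_(i < d) v i - \sum_(i < d) w i| <= d%:R * (e / d.+1%:R).
      rewrite -sumrB; apply: (le_trans (ler_norm_sum _ _ _)).
      have -> : d%:R * (e / d.+1%:R) = \sum_(i < d) (e / d.+1%:R) by rewrite sumr_const card_ord mulr_natl.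
      by apply: ler_sum => i _; apply: ltW.
    have h2 : d%:R * (e / d.+1%:R) < e.
      rewrite mulrA ltr_pdivrMr ?ltr0Sn // hd1; nra.
    move: (le_lt_trans h1 h2); rewrite sv /e distrC ltxx //.
  split => //.
  case: (pselect (S w)) => // nSw; exfalso.
  have nw : ~ (S `|` [set @zero_pt R d]) w.
    case => // w0.
    move: ws; rewrite w0 /zero_pt big1 // => /eqP; rewrite eq_sym oner_eq0 //.
  have [del del0 H] := hclosed w wnn nw.
  have [v [[Sv sv] Bv]] := get (del / d.+1%:R) ltac:(by rewrite divr_gt0).
  apply: (H v); last by left.
    by move=> i; apply: ltW; apply: hSpos.
  by apply: enorm_small.
have hK : compact K := subclosed_compact Kcl hbox Ksub.
pose P (s : R) (v : 'I_d -> R) :=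
  unit_cube (scale_pt s v) -> C1 (scale_pt s v) <= C2 (scale_pt s v).
have loc : forall w, K w -> \forall x' \near w & s \near (0:R)^'+, P s x'.
  move=> w [Sw sw].
  have wpos := hSpos w Sw.
  have wnn : nonneg_orthant w by move=> i; apply: ltW.
  have w1 i : w i <= 1 by rewrite -sw coord_le_sum.
  have [eta [eta0 eta1 [s0 s00 H]]] :=
    @local_cmp _ _ C1 C2 Lam1 Lam2 w hT1 hT2 wnn (hlt w wpos).
  rewrite /prop_near2.
  exists ([set v : 'I_d -> R | forall i, `|v i - w i| < eta * w i],
          fun s : R => 0 < s /\ s < Num.min s0 (1/2)).
    split; first by apply: box_nbhs => i; rewrite mulr_gt0.
    by apply: near0r_small; rewrite lt_min s00 /= divr_gt0.
  case=> x s /= [hx [s0' ]]; rewrite lt_min => /andP [ss0 s12] hcube.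
  have hxi i : (1 - eta) * w i <= x i /\ x i <= (1 + eta) * w i.
    by have := hx i; rewrite ltr_norml => /andP [h1 h2]; split; nra.
  have hb : unit_cube (scale_pt (s * (1 + eta)) w).
    move=> i; rewrite /scale_pt; have := w1 i; have := wnn i.
    move=> a b; apply/andP; split; first by rewrite mulr_ge0 // mulr_ge0 //; lra.
    have : s * (1 + eta) <= 1 by nra.
    move=> c; nra.
  have ha : unit_cube (scale_pt (s * (1 - eta)) w).
    move=> i; rewrite /scale_pt; have := w1 i; have := wnn i.
    move=> a b; apply/andP; split; first by rewrite mulr_ge0 // mulr_ge0 //; lra.
    have : s * (1 - eta) <= 1 by nra.
    move=> c; nra.
  apply: (le_trans (@copula_mono _ _ C1 _ _ hC1 hcube hb _)).
    by move=> i; rewrite /scale_pt -mulrA ler_pM2l //; case: (hxi i).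
  apply: (le_trans (ltW (H s s0' ss0))).
  apply: (@copula_mono _ _ C2 _ _ hC2 ha hcube).
  by move=> i; rewrite /scale_pt -mulrA ler_pM2l //; case: (hxi i).
have := (proj1 (compact_near_coveringP K)) hK R (0:R)^'+ P _ loc.
move=> hnear; have [del del0 Hd] := @near0rP R _ (hnear _).
exists (del / d%:R); first by rewrite divr_gt0.
move=> u Su hball hcube.
have upos := hSpos u Su.
have unn : nonneg_orthant u by move=> i; apply: ltW.
set s := \sum_(i < d) u i.
have s0 : 0 < s.
  by apply: (lt_le_trans (upos (Ordinal dpos))); apply: coord_le_sum.
have sdel : s < del.
  have h1 : s <= \sum_(i < d) enorm u.
    apply: ler_sum => i _; have := @coord_le_enorm R d u i.
    by rewrite ger0_norm // unn.
  rewrite sumr_const card_ord -mulr_natl in h1.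
  apply: (le_lt_trans h1).
  by move: hball; rewrite /eball0 ltr_pdivlMr // mulrC.
pose v := scale_pt s^-1 u.
have Kv : K v.
  split; first by apply: hcone => //; rewrite invr_gt0.
  by rewrite /v /scale_pt -mulr_sumr mulVf // gt_eqF.
have euv : scale_pt s v = u.
  by apply: funext => i; rewrite /v /scale_pt mulrA mulfV ?mul1r // gt_eqF.
have := Hd s s0 sdel v Kv; rewrite /P euv; exact.
Qed.

End Helpers.

Theorem mainTheorem5 (R : realType) (d : nat)
    (C1 C2 Lam1 Lam2 : ('I_d -> R) -> R) (S : set ('I_d -> R)) :
  is_copula C1 -> is_copula C2 ->
  is_tdf C1 Lam1 -> is_tdf C2 Lam2 ->
  td_lt Lam1 Lam2 ->
  S `<=` @pos_orthant R d ->
  is_cone S ->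
  closed_in_orthant (S `|` [set @zero_pt R d]) ->
  exists2 eps : R, 0 < eps &
    forall u, S u -> eball0 eps u -> unit_cube u -> C1 u <= C2 u.
Proof. exact: main_aux. Qed.
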